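(* Under the same setting, with probability at least $1-(1/2)^d$ the BACON Sketch estimate satisfies $$\hat{E}_{dst} \le E_{dst} + 2m\left(1-e^{-n/(mw)}\right).$$
   Context: BACON Sketch: a $d\times w\times m$ array of bits, organised as $d$ rows, each row consisting of $w$ Bitmap registers of $m$ bits, all initially $0$. It uses a hash function $h_{bm}$ mapping source IPs to $\{0,\dots,m-1\}$ and $d$ pairwise-independent hash functions $h^1_{cm},\dots,h^d_{cm}$ mapping destination IPs to $\{0,\dots,w-1\}$. Update: for each packet with source $src$ and destination $dst$, for each row $i$, the bit with index $h_{bm}(src)$ inside the Bitmap register number $h^i_{cm}(dst)$ of row $i$ is set to $1$. Query: for destination $dst$, $E_i$ is the number of $1$-bits in Bitmap register $h^i_{cm}(dst)$ of row $i$, and $\hat{E}_{dst}=\min_i E_i$. In a time interval, $n$ is the number of distinct source IPs, $E_{dst}$ is the true number of distinct source IPs contacting destination $dst$. Modelling assumptions: hash values uniform and independent across distinct inputs and rows; the expected number of distinct elements from other destinations colliding into the register of $dst$ in a row is $(n-E_{dst})/w$; with $m$ large, the expected number of $1$-bits in a register receiving $k$ distinct sources is $m(1-e^{-k/m})$; the pure Bitmap estimate (without collisions) $\hat{E}^{Bitmap}_{dst}$ satisfies $\hat{E}^{Bitmap}_{dst}\le E_{dst}$. *)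

(* Defs.v *)
From HB Require Import structures.
From mathcomp Require Import all_boot all_order all_algebra.
From mathcomp Require Import reals sequences exp.
Set Implicit Arguments.
Unset Strict Implicit.
Unset Printing Implicit Defensive.
Import Order.TTheory GRing.Theory Num.Theory.
Local Open Scope ring_scope.

(* A discrete probability on a finite sample space T (randomness of the hashes). *)
Definition is_prob (R : realType) (T : finType) (P : T -> R) : Prop :=
  (forall t, 0 <= P t) /\ \sum_(t : T) P t = 1.

Definition Pr (R : realType) (T : finType) (P : T -> R) (A : pred T) : R :=
  \sum_(t : T | A t) P t.

Definition Ex (R : realType) (T : finType) (P : T -> R) (X : T -> R) : R :=
  \sum_(t : T) P t * X t.

Definition rows_indep (R : realType) (T : finType) (P : T -> R) (d : nat)
  (U : Type) (V : nat -> T -> U) : Prop :=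
  forall (J : {set 'I_d}) (A : nat -> pred U),
    Pr P [pred t | [forall i in J, A i (V i t)]]
    = \prod_(i in J) Pr P [pred t | A i (V i t)].

(* BACON query: hat E_dst = min over the d rows of E_i (rows indexed 0..d-1;
   the row-0 value is used as the initial value of the fold, which is harmless
   since row 0 is among the rows when d > 0). *)
Definition bacon_estimate (R : realType) (T : finType) (d : nat)
  (Er : nat -> T -> R) (t : T) : R :=
  \big[Num.min/Er 0%N t]_(i < d) Er i t.

(* Main.v *)
Require Import Defs.
From HB Require Import structures.
From mathcomp Require Import all_boot all_order all_algebra.
From mathcomp Require Import reals sequences exp.
From mathcomp Require Import ring lra.
Import Order.TTheory GRing.Theory Num.Theory.
Local Open Scope ring_scope.

Lemma part_sum (R : realType) (T : finType) (X : T -> nat) (N : nat) (G : T -> R) :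
  (forall t, (X t <= N)%N) ->
  \sum_(t : T) G t = \sum_(k < N.+1) \sum_(t : T | X t == k) G t.
Proof.
move=> HX.
transitivity (\sum_(t : T) \sum_(k < N.+1) (if X t == k then G t else 0)).
  apply: eq_bigr => t _.
  have Hl : (X t < N.+1)%N by rewrite ltnS.
  rewrite (bigD1 (Ordinal Hl)) //= eqxx big1 ?addr0 // => k Hk.
  case: eqP => // E; case/eqP: Hk; apply: val_inj; by rewrite /= E.
rewrite exchange_big; apply: eq_bigr => k _.
by rewrite [RHS]big_mkcond.
Qed.

Lemma tangent (R : realType) (m : R) (x k : R) : 0 < m ->
  m * (1 - expR (- (k / m))) <= m * (1 - expR (- x)) + expR (- x) * (k - m * x).
Proof.
move=> m0.
have H := expR_ge1Dx (x - k / m).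
have E : expR (- (k / m)) = expR (-x) * expR (x - k/m).
  by rewrite -expRD; congr expR; ring.
rewrite E.
have ex0 : 0 < expR (-x) by apply: expR_gt0.
have : expR (-x) * (1 + (x - k/m)) <= expR (-x) * expR (x - k/m).
  by rewrite ler_pM2l.
move=> H2.
have Hk : k = m * (k / m) by field; lra.
rewrite [in X in _ <= _ + _ * (X - _)]Hk.
set e := expR (-x) in H2 ex0 *; set y := expR (x - k/m) in H2 *.
set z := k / m in H2 *.
nra.
Qed.

Lemma row_mean (R : realType) (T : finType) (P : T -> R) (m w n N : nat)
  (X : T -> nat) (C : T -> R) :
  is_prob P -> (0 < m)%N -> (0 < w)%N -> (N <= n)%N ->
  (forall t, (X t <= N)%N) ->
  Ex P (fun t => (X t)%:R) = N%:R / w%:R ->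
  (forall k, \sum_(t : T | X t == k) P t * C t
     = m%:R * (1 - expR (- (k%:R / m%:R))) * Pr P [pred t | X t == k]) ->
  \sum_(t : T) P t * C t <= m%:R * (1 - expR (- (n%:R / (m%:R * w%:R)))).
Proof.
move=> [P0 P1] m0 w0 Nn HX EX HC.
set x := n%:R / (m%:R * w%:R).
set a := m%:R * (1 - expR (- x)).
set e := expR (- x).
set p := fun k : nat => Pr P [pred t | X t == k].
have p0 : forall k, 0 <= p k by move=> k; rewrite /p /Pr sumr_ge0.
have S1 : \sum_(k < N.+1) p k = 1 by rewrite -P1 (@part_sum _ _ X N _ HX).
have S2 : \sum_(k < N.+1) k%:R * p k = N%:R / w%:R.
  rewrite -EX /Ex (@part_sum _ _ X N _ HX); apply: eq_bigr => k _.
  rewrite /p /Pr mulr_sumr; apply: eq_big => // t /eqP ->; by rewrite mulrC.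
have mR : (0 : R) < m%:R by rewrite ltr0n.
have wR : (0 : R) < w%:R by rewrite ltr0n.
rewrite (@part_sum _ _ X N _ HX).
under eq_bigr => k _ do rewrite HC.
apply: (le_trans (y := \sum_(k < N.+1) (a * p k + e * (k%:R * p k - m%:R * x * p k)))).
  apply: ler_sum => k _.
  have T1 := @tangent R _ x (k%:R) mR.
  rewrite -/e -/a in T1.
  have := ler_wpM2r (p0 k) T1.
  move=> H; apply: le_trans H _; rewrite le_eqVlt; apply/orP; left; apply/eqP; ring.
rewrite big_split /= -mulr_sumr -mulr_sumr sumrB -mulr_sumr S1 S2 mulr1.
have e0 : 0 <= e by rewrite /e expR_ge0.
have : N%:R / w%:R - m%:R * x <= 0.
  rewrite subr_le0 /x.
  have -> : m%:R * (n%:R / (m%:R * w%:R)) = n%:R / w%:R :> R.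
    by field; apply/andP; split; rewrite gt_eqF.
  by rewrite ler_pM2r ?invr_gt0 // ler_nat.
move=> H; have := mulr_ge0_le0 e0 H; lra.
Qed.

Lemma sum_sub_le (R : realType) (T : finType) (Q : pred T) (F : T -> R) :
  (forall t, 0 <= F t) -> \sum_(t | Q t) F t <= \sum_t F t.
Proof.
move=> F0; rewrite big_mkcond; apply: ler_sum => t _.
by case: (Q t) => //=.
Qed.

Arguments sum_sub_le {R T}.

Lemma markov_half (R : realType) (T : finType) (P : T -> R) (C : T -> R) (a : R) :
  is_prob P -> (forall t, 0 <= C t) -> 0 <= a ->
  \sum_t P t * C t <= a -> Pr P [pred t | 2 * a < C t] <= 1 / 2.
Proof.
move=> [P0 P1] C0 a0 HE.
have F0 : forall t, 0 <= P t * C t by move=> t; rewrite mulr_ge0.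
case: (ltrP 0 a) => ha.
  have : Pr P [pred t | 2 * a < C t] * (2 * a) <= a.
    rewrite /Pr mulr_suml; apply: (le_trans _ HE).
    apply: (le_trans _ (sum_sub_le [pred t | 2 * a < C t] _ F0)).
    apply: ler_sum => t /= /ltW H; by rewrite ler_wpM2l.
  move=> H; have : Pr P [pred t | 2 * a < C t] * (2 * a) <= 1/2 * (2 * a) by lra.
  by rewrite ler_pM2r ?mulr_gt0.
have a00 : a = 0 by apply/eqP; rewrite eq_le ha a0.
rewrite /Pr big1 /=; first lra.
move=> t; rewrite a00 mulr0 => Ht.
have : P t * C t <= 0.
  rewrite -a00; apply: (le_trans _ HE); apply: (le_trans _ (sum_sub_le (pred1 t) _ F0)).
  by rewrite big_pred1_eq.
move=> H; apply/eqP; rewrite eq_le P0 andbT.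
by rewrite -(pmulr_lle0 _ Ht).
Qed.

Theorem theorem2 (R : realType) (T : finType) (P : T -> R)
  (d m w n Edst : nat)
  (Ebm : T -> R)              (* pure Bitmap estimate (1-bits from dst's own sources) *)
  (Er : nat -> T -> R)        (* E_i : number of 1-bits in the dst register of row i *)
  (X : nat -> T -> nat)       (* number of distinct colliding sources in row i *)
  (C : nat -> T -> R)         (* number of 1-bits set by those colliding sources *)
  :
  is_prob P ->
  (0 < d)%N -> (0 < m)%N -> (0 < w)%N -> (Edst <= n)%N ->
  (forall t, Ebm t <= Edst%:R) ->
  (forall i t, (i < d)%N -> Er i t <= Ebm t + C i t) ->
  (forall i t, (i < d)%N -> 0 <= C i t) ->
  (forall i t, (i < d)%N -> (X i t <= n - Edst)%N) ->
  (forall i, (i < d)%N -> Ex P (fun t => (X i t)%:R) = (n - Edst)%:R / w%:R) ->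
  (forall i k, (i < d)%N ->
     \sum_(t : T | X i t == k) P t * C i t
     = m%:R * (1 - expR (- (k%:R / m%:R))) * Pr P [pred t | X i t == k]) ->
  rows_indep P d (fun i t => (X i t, C i t)) ->
  1 - (1 / 2) ^+ d <=
    Pr P [pred t | bacon_estimate d Er t
                   <= Edst%:R + 2 * m%:R * (1 - expR (- (n%:R / (m%:R * w%:R))))].
Proof.
move=> Pp d0 m0 w0 En Hbm HEr HC0 HX HEX HCk Hind.
set a : R := m%:R * (1 - expR (- (n%:R / (m%:R * w%:R)))).
have a0 : 0 <= a.
  rewrite /a mulr_ge0 // subr_ge0 expR_le1 oppr_le0.
  by rewrite mulr_ge0 // invr_ge0 mulr_ge0.
have Hrow : forall i, (i < d)%N -> Pr P [pred t | 2 * a < C i t] <= 1 / 2.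
  move=> i Hi; apply: (@markov_half R T P (C i) a Pp (fun t => HC0 i t Hi) a0).
  rewrite /a; apply: (@row_mean R T P m w n (n - Edst) (X i) (C i) Pp m0 w0 (leq_subr Edst n) (fun t => HX i t Hi) (HEX i Hi)).
  by move=> k; apply: HCk.
have Hall := Hind [set: 'I_d] (fun i p => 2 * a < p.2).
have Hprod : Pr P [pred t | [forall i in [set: 'I_d], 2 * a < C i t]] <= (1 / 2) ^+ d.
  rewrite Hall /=.
  apply: (le_trans (y := \prod_(i in [set: 'I_d]) (1 / 2 : R))).
    apply: ler_prod => i _; apply/andP; split; first by rewrite /Pr sumr_ge0 // => t _; case: Pp.
    exact: Hrow.
  by rewrite prodr_const cardsT card_ord.
set G := [pred t | _ <= _].
have HG : forall t, ~~ G t -> [forall i in [set: 'I_d], 2 * a < C i t].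
  move=> t nG; apply/forallP => i; apply/implyP => _; rewrite ltNge; apply/negP => Hi.
  apply: (negP nG); rewrite /G /= /bacon_estimate.
  apply: (le_trans (bigmin_le _ i (fun i : 'I_d => Er i t))).
  apply: (le_trans (HEr i t (ltn_ord i))).
  have := Hbm t; rewrite -mulrA -/a; lra.
have Hsplit : Pr P G + Pr P (predC G) = 1.
  by case: Pp => _ <-; rewrite /Pr [RHS](bigID G).
have HC : Pr P (predC G) <= Pr P [pred t | [forall i in [set: 'I_d], 2 * a < C i t]].
  rewrite /Pr big_mkcond [X in _ <= X]big_mkcond; apply: ler_sum => t _.
  case: Pp => P0 _.
  case E: (predC G t); first by rewrite /= (HG t E).
  by case: ifP.
have -> : 1 - (1 / 2) ^+ d = Pr P G + (Pr P (predC G) - (1 / 2) ^+ d) :> R.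
  by rewrite addrA Hsplit.
rewrite gerDl subr_le0; exact: le_trans HC Hprod.
Qed.
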